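(* Let $n\ge2$ and let $\Pi$ be an $(n-1,n)$-Dyck path. A cell $c\in\lambda(\Pi)$ satisfies \[ \frac{\operatorname{arm}(c)}{\operatorname{leg}(c)}\le\frac{n-1}{n}<\frac{\operatorname{arm}(c)+1}{\operatorname{leg}(c)+1} \] (with $\frac00=0$ and $\frac x0=\infty$ for $x\ne0$) if and only if its south and east borders are both steps of $\Pi$, i.e. if and only if $\operatorname{arm}(c)=\operatorname{leg}(c)=0$.
   Context: An $(n-1,n)$-Dyck path is a lattice path from $(0,0)$ to $(n-1,n)$ of unit north and east steps staying weakly above the line $y=\frac{n}{n-1}x$. $\lambda(\Pi)$ is the set of unit cells of the rectangle $[0,n-1]\times[0,n]$ lying above (northwest of) $\Pi$. For $c\in\lambda(\Pi)$, $\operatorname{arm}(c)$ is the number of cells of $\lambda(\Pi)$ strictly east of $c$ in its row and $\operatorname{leg}(c)$ the number of cells of $\lambda(\Pi)$ strictly south of $c$ in its column. *)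

(* Defs.v *)
From mathcomp Require Import all_boot all_order all_algebra.
Set Implicit Arguments. Unset Strict Implicit. Unset Printing Implicit Defensive.
Import Order.TTheory GRing.Theory Num.Theory.

(* A lattice path is a sequence of steps: true = North (0,1), false = East (1,0). *)

Definition ptx (P : seq bool) (k : nat) : nat := count negb (take k P).
Definition pty (P : seq bool) (k : nat) : nat := count id (take k P).

(* (n-1,n)-Dyck path: from (0,0) to (n-1,n), staying weakly above y = n/(n-1) x,
   i.e. every lattice point (x,y) on it satisfies n*x <= (n-1)*y (checking the
   vertices suffices since the region above the line is convex). *)
Definition dyck (n : nat) (P : seq bool) : bool :=
  [&& count negb P == n.-1, count id P == n &
      all (fun k => n * ptx P k <= n.-1 * pty P k) (iota 0 (size P).+1)].

(* The unit cell c = (i,j) is the square [i,i+1] x [j,j+1].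
   It lies in lambda(P) (inside the rectangle [0,n-1]x[0,n] and above/northwest of P)
   iff the path passes through a point weakly southeast of its SE corner (i+1,j). *)
Definition in_lambda (n : nat) (P : seq bool) (i j : nat) : bool :=
  [&& i < n.-1, j < n &
      has (fun k => (i.+1 <= ptx P k) && (pty P k <= j)) (iota 0 (size P).+1)].

Definition arm (n : nat) (P : seq bool) (i j : nat) : nat :=
  \sum_(i.+1 <= i' < n.-1) (in_lambda n P i' j : nat).

Definition leg (n : nat) (P : seq bool) (i j : nat) : nat :=
  \sum_(0 <= j' < j) (in_lambda n P i j' : nat).

(* Extended nonnegative rationals: None = infinity.
   efrac a b = a/b with the conventions 0/0 = 0 and x/0 = infinity for x <> 0. *)
Definition efrac (a b : nat) : option rat :=
  if b == 0%N then (if a == 0%N then Some 0%R else None)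
  else Some (a%:R / b%:R)%R.

Definition le_ext (x y : option rat) : bool :=
  match x, y with
  | _, None => true
  | None, Some _ => false
  | Some a, Some b => (a <= b)%R
  end.

Definition lt_ext (x y : option rat) : bool :=
  match x, y with
  | None, _ => false
  | Some _, None => true
  | Some a, Some b => (a < b)%R
  end.

(* Step k of P goes from point k to point k+1. *)
Definition south_border_step (P : seq bool) (i j : nat) : bool :=
  has (fun k => [&& ptx P k == i, pty P k == j & ~~ nth true P k]) (iota 0 (size P)).

Definition east_border_step (P : seq bool) (i j : nat) : bool :=
  has (fun k => [&& ptx P k == i.+1, pty P k == j & nth false P k]) (iota 0 (size P)).

(* Main.v *)
Require Import Defs.
From mathcomp Require Import all_boot all_order all_algebra.
From mathcomp Require Import zify.
Import Order.TTheory GRing.Theory Num.Theory.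

Lemma ptx0 P : ptx P 0 = 0%N. Proof. by rewrite /ptx take0. Qed.
Lemma pty0 P : pty P 0 = 0%N. Proof. by rewrite /pty take0. Qed.

Lemma ptxS P k x0 : (k < size P)%N -> ptx P k.+1 = (ptx P k + ~~ nth x0 P k)%N.
Proof. by move=> h; rewrite /ptx (take_nth x0 h) -cats1 count_cat /= addn0. Qed.
Lemma ptyS P k x0 : (k < size P)%N -> pty P k.+1 = (pty P k + nth x0 P k)%N.
Proof. by move=> h; rewrite /pty (take_nth x0 h) -cats1 count_cat /= addn0. Qed.

Lemma ptxy P k : (k <= size P)%N -> (ptx P k + pty P k)%N = k.
Proof.
elim: k => [|k IH] h; first by rewrite ptx0 pty0.
rewrite (@ptxS _ _ true h) (@ptyS _ _ true h); have := IH (ltnW h).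
by case: (nth true P k) => /=; lia.
Qed.

Lemma cnt_mono (a : pred bool) P k k' : (k <= k')%N ->
  (count a (take k P) <= count a (take k' P))%N.
Proof.
move=> h; rewrite -(take_takel P h); set s := take k' P.
by rewrite -{2}(cat_take_drop k s) count_cat leq_addr.
Qed.

Lemma ptx_mono P k k' : (k <= k')%N -> (ptx P k <= ptx P k')%N.
Proof. exact: cnt_mono. Qed.
Lemma pty_mono P k k' : (k <= k')%N -> (pty P k <= pty P k')%N.
Proof. exact: cnt_mono. Qed.

Lemma ptx_le P k : (ptx P k <= count negb P)%N.
Proof.
case: (leqP k (size P)) => h.
  by rewrite -{2}(take_size P); apply: ptx_mono.
by rewrite /ptx take_oversize // ltnW.
Qed.

Lemma pty_size P : pty P (size P) = count id P.
Proof. by rewrite /pty take_size. Qed.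

Lemma in_iotaS k s : (k \in iota 0 s.+1) = (k <= s)%N.
Proof. by rewrite mem_iota add0n ltnS. Qed.
Lemma in_iota0 k s : (k \in iota 0 s) = (k < s)%N.
Proof. by rewrite mem_iota add0n. Qed.

Lemma lam_mono n P i i' j j' : (j < n)%N -> (i <= i')%N -> (j' <= j)%N ->
  in_lambda n P i' j' -> in_lambda n P i j.
Proof.
move=> hj hi hj' /and3P[h1 h2 /hasP[k hk /andP[a b]]].
apply/and3P; split => //; first by apply: leq_ltn_trans h1.
apply/hasP; exists k => //; apply/andP; split.
  by apply: leq_trans a.
by apply: leq_trans hj'.
Qed.

Lemma part1 n P i j : in_lambda n P i j -> count negb P = n.-1 -> count id P = n ->
  (south_border_step P i j && east_border_step P i j) <->
  ((i.+1 < n.-1 -> ~~ in_lambda n P i.+1 j) /\ (0 < j -> ~~ in_lambda n P i j.-1))%N.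
Proof.
move=> /and3P[Hi Hj /hasP[k0 Hk0 /andP[H1 H2]]] Cx Cy.
rewrite in_iotaS in Hk0.
split.
- move/andP=> [/hasP [k Hk /and3P[/eqP Hx /eqP Hy Hn]]
              /hasP [k' Hk' /and3P [/eqP Hx' /eqP Hy' Hn']]].
  rewrite in_iota0 in Hk; rewrite in_iota0 in Hk'.
  have e1 := @ptxS _ _ true Hk; have e2 := @ptyS _ _ true Hk.
  rewrite (negbTE Hn) /= in e1 e2.
  have s1 := @ptxy _ _ (ltnW Hk'); have s2 := @ptxy _ _ (ltnW Hk).
  have ek : k' = k.+1 by lia.
  subst k'.
  have e3 := @ptyS _ _ false Hk'; rewrite Hn' /= in e3.
  split.
  + move=> _; apply/negP; move/and3P=> [_ _ /hasP[m Hm /andP[A B]]].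
    case: (leqP m k.+1) => hm.
      by have := @ptx_mono P _ _ hm; lia.
    by have := @pty_mono P _ _ hm; lia.
  + move=> hj; apply/negP; move/and3P=> [_ _ /hasP[m Hm /andP[A B]]].
    case: (leqP m k) => hm.
      by have := @ptx_mono P _ _ hm; lia.
    by have := @pty_mono P _ _ hm; lia.
- move=> [A B].
  have ex : exists k, (i.+1 <= ptx P k)%N by exists k0.
  case: (ex_minnP ex) => k Qk Kmin.
  have kk0 : (k <= k0)%N by apply: Kmin.
  case: k Qk Kmin kk0 => [|k1] Qk Kmin kk0; first by rewrite ptx0 in Qk.
  have hk1 : (k1 < size P)%N by lia.
  have px : (ptx P k1 <= i)%N.
    by rewrite leqNgt; apply/negP => /Kmin; rewrite ltnn.
  have ex1 := @ptxS _ _ true hk1; have ey1 := @ptyS _ _ true hk1.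
  have nk : nth true P k1 = false.
    by move: ex1 Qk px; case: (nth true P k1) => /=; lia.
  rewrite nk /= in ex1 ey1.
  have yle : (pty P k1.+1 <= j)%N by have := @pty_mono P _ _ kk0; lia.
  have yeq : pty P k1.+1 = j.
    apply/eqP; rewrite eqn_leq yle /=; rewrite leqNgt; apply/negP => lt.
    move: (B (leq_ltn_trans (leq0n _) lt)) => /negP; apply.
    apply/and3P; split => //; first by lia.
    apply/hasP; exists k1.+1; first by rewrite in_iotaS; lia.
    by apply/andP; split; lia.
  apply/andP; split.
    apply/hasP; exists k1; first by rewrite in_iota0.
    by rewrite nk andbT; apply/andP; split; apply/eqP; lia.
  have hk2 : (k1.+1 < size P)%N.
    rewrite ltn_neqAle; apply/andP; split; last by lia.
    apply/negP => /eqP e. have := pty_size P; rewrite -e; lia.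
  apply/hasP; exists k1.+1; first by rewrite in_iota0.
  apply/and3P; split; [apply/eqP; lia | apply/eqP; lia|].
  case En: (nth false P k1.+1) => //.
  have ex2 := @ptxS _ _ false hk2; have ey2 := @ptyS _ _ false hk2.
  rewrite En /= in ex2 ey2.
  have := ptx_le P k1.+2; rewrite Cx => hb.
  have : (i.+1 < n.-1)%N by lia.
  move/A/negP => HA; exfalso; apply: HA.
  apply/and3P; split => //; first by lia.
  apply/hasP; exists k1.+2; first by rewrite in_iotaS; lia.
  by apply/andP; split; lia.
Qed.

Lemma arm0 n P i j : in_lambda n P i j ->
  arm n P i j = 0%N <-> (i.+1 < n.-1 -> ~~ in_lambda n P i.+1 j)%N.
Proof.
move=> L; have hj : (j < n)%N by case/and3P: L.
rewrite /arm; split.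
- move=> h lt; move: h; rewrite big_ltn //; move/eqP; rewrite addn_eq0.
  by case/andP; rewrite eqb0.
- move=> A; rewrite big_nat_cond big1 // => i' /andP[/andP[h1 h2] _].
  apply/eqP; rewrite eqb0; apply/negP => Li.
  have lt : (i.+1 < n.-1)%N by lia.
  by move: (A lt) => /negP; apply; apply: (@lam_mono _ _ _ _ _ _ hj h1 (leqnn j) Li).
Qed.

Lemma leg0 n P i j : in_lambda n P i j ->
  leg n P i j = 0%N <-> (0 < j -> ~~ in_lambda n P i j.-1)%N.
Proof.
move=> L; have hj : (j < n)%N by case/and3P: L.
rewrite /leg; split.
- case: j L hj => [|j] L hj h lt //; move: h.
  rewrite big_nat_recr //=; move/eqP; rewrite addn_eq0.
  by case/andP => _; rewrite eqb0.
- move=> A; rewrite big_nat_cond big1 // => j' /andP[/andP[h1 h2] _].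
  apply/eqP; rewrite eqb0; apply/negP => Li.
  have lt : (0 < j)%N by lia.
  move: (A lt) => /negP; apply; apply: (@lam_mono _ _ _ _ _ _ _ (leqnn i) _ Li); lia.
Qed.

Lemma leg_le n P i j : (leg n P i j <= j)%N.
Proof.
rewrite /leg; apply: (@leq_trans (\sum_(0 <= j' < j) 1)%N).
  by apply: leq_sum => k _; apply: leq_b1.
by rewrite sum_nat_const_nat muln1 subn0.
Qed.

Lemma fracle (a b c d : nat) : (0 < b)%N -> (0 < d)%N ->
  ((a%:R / b%:R : rat) <= c%:R / d%:R)%R = (a * d <= c * b)%N.
Proof.
move=> hb hd.
by rewrite ler_pdivrMr ?ltr0n // mulrAC ler_pdivlMr ?ltr0n // -!natrM ler_nat.
Qed.
Lemma fraclt (a b c d : nat) : (0 < b)%N -> (0 < d)%N ->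
  ((a%:R / b%:R : rat) < c%:R / d%:R)%R = (a * d < c * b)%N.
Proof.
move=> hb hd.
by rewrite ltr_pdivrMr ?ltr0n // mulrAC ltr_pdivlMr ?ltr0n // -!natrM ltr_nat.
Qed.

Lemma part2 n a l : (2 <= n)%N -> (l < n)%N ->
  (le_ext (efrac a l) (efrac n.-1 n) && lt_ext (efrac n.-1 n) (efrac a.+1 l.+1))
  <-> (a = 0%N /\ l = 0%N).
Proof.
move=> hn hl; rewrite /efrac.
have -> : (n == 0%N) = false by apply/eqP; lia.
case: l hl => [|l] hl /=.
- case: a => [|a] /=; last by split => //; case.
  split => // _; apply/andP; split.
    by rewrite divr_ge0 ?ler0n.
  by rewrite divr1 ltr_pdivrMr ?ltr0n // mul1r ltr_nat; lia.
- split; last by case.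
  have n0 : (0 < n)%N by lia.
  move/andP=> [h1 h2]; rewrite fracle // in h1; rewrite fraclt // in h2.
  exfalso; have [m em] : exists m, n = m.+1 by exists n.-1; lia.
  subst n; rewrite /= in h1 h2 hl.
  have e : (a * m.+1 = m * l.+1)%N by nia.
  case: (leqP l.+1 a) => ha.
    have : (l.+1 * m.+1 <= a * m.+1)%N by apply: leq_mul.
    nia.
  have : (a = m * (l.+1 - a))%N by nia.
  have : (0 < l.+1 - a)%N by lia.
  nia.
Qed.

Theorem theorem6 (n : nat) (P : seq bool) (i j : nat) :
  (2 <= n)%N -> dyck n P -> in_lambda n P i j ->
  let cond :=
    le_ext (efrac (arm n P i j) (leg n P i j)) (efrac n.-1 n) &&
    lt_ext (efrac n.-1 n) (efrac (arm n P i j).+1 (leg n P i j).+1) in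
  (cond <-> south_border_step P i j && east_border_step P i j) /\
  (cond <-> (arm n P i j = 0%N /\ leg n P i j = 0%N)).
Proof.
move=> hn /and3P[/eqP Cx /eqP Cy _] L cond.
have hj : (j < n)%N by case/and3P: L.
have hl : (leg n P i j < n)%N by apply: leq_ltn_trans (leg_le n P i j) hj.
have P2 := @part2 n (arm n P i j) _ hn hl.
have A0 := @arm0 _ _ _ _ L; have L0 := @leg0 _ _ _ _ L.
have P1 := @part1 _ _ _ _ L Cx Cy.
split.
- move: P1 P2 A0 L0; rewrite /cond.
  move=> [P1a P1b] [P2a P2b] [A0a A0b] [L0a L0b]; split.
  + move/P2a => [ha hl0]; apply: P1b; split; [exact: A0a | exact: L0a].
  + move/P1a => [h1 h2]; apply: P2b; split; [exact: A0b | exact: L0b].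
- exact: P2.
Qed.
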